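(* Let $n\ge1$ and let $f_1,\ldots,f_n$ be Alpert multiwavelets of multiplicity $n$. Then there is a real constant $c_{n,0}$ with $c_{n,0}^{-2}=2\int_0^1 p_{n-1}(x)^2\,dx$ such that $f_n(x)=c_{n,0}\,p_{n-1}(x)$ for $x\in(0,1)$. If moreover $n\ge2$, there is a real constant $d_{n,0}$ with $d_{n,0}^{-2}=2\int_0^1 q_{n-1}(x)^2\,dx$ such that $f_{n-1}(x)=d_{n,0}\,q_{n-1}(x)$ for $x\in(0,1)$.
   Context: Alpert multiwavelets of multiplicity $n\in\mathbb{N}$: real functions $f_1,\ldots,f_n$ supported on $[-1,1]$ such that (i) the restriction of each $f_i$ to $(0,1)$ is a polynomial of degree at most $n-1$; (ii) $f_k(-t)=(-1)^{k+n-1}f_k(t)$ for $t\in(0,1)$; (iii) $\int_{-1}^1 f_i(t)f_j(t)\,dt=\delta_{i,j}$ for $1\le i,j\le n$; (iv) $\int_{-1}^1 f_k(t)t^i\,dt=0$ for $i=0,1,\ldots,k+n-2$. Pochhammer symbol: $(a)_0=1$, $(a)_n=a(a+1)\cdots(a+n-1)$; for real $a$ and integer $n\ge0$, $\binom{n+a}{n}:=\frac{(a+1)_n}{n!}$. Define $p_n(x)=\sum_{k=0}^n\binom nk\binom{n+\frac k2}{n}(-1)^{n-k}x^k$ and $q_n(x)=\sum_{k=0}^n\binom nk\binom{n+\frac{k-1}2}{n}(-1)^{n-k}x^k$. *)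

(* Defs.v *)
From Stdlib Require Import Reals Factorial Binomial.
Open Scope R_scope.

Fixpoint sumR (m : nat) (g : nat -> R) : R :=
  match m with
  | O => 0
  | S m' => sumR m' g + g m'
  end.

Fixpoint poch (a : R) (n : nat) : R :=
  match n with
  | O => 1
  | S n' => poch a n' * (a + INR n')
  end.

(* generalized binomial  binom(n+a, n) := (a+1)_n / n! *)
Definition gbinom (n : nat) (a : R) : R := poch (a + 1) n / INR (fact n).

Definition p_poly (n : nat) (x : R) : R :=
  sumR (S n) (fun k => C n k * gbinom n (INR k / 2) * (-1) ^ (n - k) * x ^ k).

Definition q_poly (n : nat) (x : R) : R :=
  sumR (S n) (fun k => C n k * gbinom n ((INR k - 1) / 2) * (-1) ^ (n - k) * x ^ k).

Definition RInt_eq (f : R -> R) (a b v : R) : Prop :=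
  exists pr : Riemann_integrable f a b, RiemannInt pr = v.

(* f 1, ..., f n are Alpert multiwavelets of multiplicity n
   (the values f 0, f (n+1), ... are irrelevant). *)
Definition Alpert (n : nat) (f : nat -> R -> R) : Prop :=
  (forall k t, (1 <= k <= n)%nat -> (t < -1 \/ 1 < t) -> f k t = 0) /\
  (forall k, (1 <= k <= n)%nat ->
     exists c : nat -> R, forall t, 0 < t < 1 -> f k t = sumR n (fun m => c m * t ^ m)) /\
  (forall k t, (1 <= k <= n)%nat -> 0 < t < 1 ->
     f k (- t) = (-1) ^ (k + n - 1) * f k t) /\
  (forall i j, (1 <= i <= n)%nat -> (1 <= j <= n)%nat ->
     RInt_eq (fun t => f i t * f j t) (-1) 1 (if Nat.eqb i j then 1 else 0)) /\
  (forall k i, (1 <= k <= n)%nat -> (i <= k + n - 2)%nat ->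
     RInt_eq (fun t => f k t * t ^ i) (-1) 1 0).

(* Main.v *)
Require Import Defs.
From Stdlib Require Import Reals Lra Lia Field Binomial Factorial.
From Coquelicot Require Import Coquelicot.
Open Scope R_scope.

Lemma sumR_ext m g h : (forall k, (k < m)%nat -> g k = h k) -> sumR m g = sumR m h.
Proof. induction m; simpl; intros H; auto. rewrite IHm by (intros; apply H; lia). rewrite H by lia. auto. Qed.

Lemma sumR_plus m g h : sumR m (fun k => g k + h k) = sumR m g + sumR m h.
Proof. induction m; simpl; [lra|]. rewrite IHm. lra. Qed.

Lemma sumR_scal m c g : sumR m (fun k => c * g k) = c * sumR m g.
Proof. induction m; simpl; [lra|]. rewrite IHm. lra. Qed.

Lemma sumR_opp m g : sumR m (fun k => - g k) = - sumR m g.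
Proof. induction m; simpl; [lra|]. rewrite IHm. lra. Qed.

Lemma sumR_zero m g : (forall k, (k < m)%nat -> g k = 0) -> sumR m g = 0.
Proof. intros H. rewrite (sumR_ext m g (fun _ => 0)) by auto. clear H. induction m; simpl; lra. Qed.

Lemma sumR_shift m g : sumR (S m) g = g O + sumR m (fun k => g (S k)).
Proof. induction m; simpl; [lra|]. simpl in IHm. rewrite IHm. lra. Qed.

Lemma cauchy_uniq N : forall (r s : nat -> R),
  (forall j, 0 < s j) -> (forall i j, (i < N)%nat -> (j < N)%nat -> s i = s j -> i = j) ->
  (forall j, (j < N)%nat -> sumR N (fun m => r m / (INR m + s j)) = 0) ->
  forall m, (m < N)%nat -> r m = 0.
Proof.
  induction N as [|N IH]; intros r s Hs Hinj Heq m Hm; [lia|].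
  set (r3 := fun m => r m * (INR N - INR m) / (INR m + s N)).
  assert (H3 : forall m, (m < N)%nat -> r3 m = 0).
  { apply (IH r3 s Hs).
    - intros; apply Hinj; auto; lia.
    - intros j Hj.
      assert (Ej := Heq j ltac:(lia)). assert (EN := Heq N ltac:(lia)).
      assert (Hne : s N - s j <> 0).
      { intro E. assert (N = j) by (apply Hinj; [lia|lia|lra]). lia. }
      assert (Hid : (INR N + s j) * sumR (S N) (fun m => r m / (INR m + s j))
                   - (INR N + s N) * sumR (S N) (fun m => r m / (INR m + s N))
                   = (s N - s j) * sumR N (fun m => r3 m / (INR m + s j))).
      { rewrite <- !sumR_scal. unfold Rminus. rewrite <- sumR_opp, <- sumR_plus. simpl.
        assert (0 < INR N + s j) by (pose proof (pos_INR N); pose proof (Hs j); lra).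
        assert (0 < INR N + s N) by (pose proof (pos_INR N); pose proof (Hs N); lra).
        replace ((INR N + s j) * (r N / (INR N + s j)) + - ((INR N + s N) * (r N / (INR N + s N)))) with 0 by (field; lra).
        rewrite Rplus_0_r.
        apply sumR_ext. intros k Hk. unfold r3.
        assert (0 < INR k + s j) by (pose proof (pos_INR k); pose proof (Hs j); lra).
        assert (0 < INR k + s N) by (pose proof (pos_INR k); pose proof (Hs N); lra).
        field; lra. }
      rewrite Ej, EN in Hid.
      apply (Rmult_eq_reg_l (s N - s j)); auto. lra. }
  assert (Hlow : forall m, (m < N)%nat -> r m = 0).
  { intros k Hk. specialize (H3 k Hk). unfold r3 in H3.
    assert (0 < INR k + s N) by (pose proof (pos_INR k); pose proof (Hs N); lra).
    assert (INR N - INR k <> 0).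
    { assert (INR k < INR N) by (apply lt_INR; auto). lra. }
    unfold Rdiv in H3. apply Rmult_integral in H3. destruct H3 as [H3|H3].
    - apply Rmult_integral in H3. destruct H3; [auto| contradiction].
    - exfalso. apply Rinv_neq_0_compat in H3; auto; lra. }
  destruct (Nat.eq_dec m N) as [->|Hmn]; [|apply Hlow; lia].
  assert (E0 := Heq O ltac:(lia)). simpl in E0.
  rewrite sumR_zero in E0 by (intros k Hk; rewrite Hlow by auto; lra).
  assert (0 < INR N + s O) by (pose proof (pos_INR N); pose proof (Hs O); lra).
  assert (E1 : r N / (INR N + s O) = 0) by lra.
  replace (r N) with ((r N / (INR N + s O)) * (INR N + s O)) by (field; lra).
  rewrite E1. ring.
Qed.

Inductive PF : nat -> (R -> R) -> Prop :=
| PFc : forall c, PF 0 (fun _ => c)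
| PFadd : forall d Q1 Q2, PF d Q1 -> PF d Q2 -> PF d (fun x => Q1 x + Q2 x)
| PFmul : forall d Q a b, PF d Q -> PF (S d) (fun x => Q x * (a * x + b))
| PFweak : forall d Q, PF d Q -> PF (S d) Q
| PFext : forall d Q Q', PF d Q -> (forall x, Q x = Q' x) -> PF d Q'.

Lemma PF0_const e Q : PF e Q -> e = O -> exists c, forall x, Q x = c.
Proof.
  induction 1; intros He; try discriminate.
  - exists c; auto.
  - destruct (IHPF1 He) as [c1 H1], (IHPF2 He) as [c2 H2]. exists (c1 + c2). intros; rewrite H1, H2; auto.
  - destruct (IHPF He) as [c1 H1]. exists c1. intros; rewrite <- H0; auto.
Qed.

Lemma PF_scal d Q k : PF d Q -> PF d (fun x => k * Q x).
Proof.
  induction 1.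
  - apply PFc.
  - eapply PFext; [apply (PFadd _ _ _ IHPF1 IHPF2)|]. intros; simpl; ring.
  - eapply PFext; [apply (PFmul _ _ a b IHPF)|]. intros; simpl; ring.
  - apply PFweak; auto.
  - eapply PFext; [apply IHPF|]. intros; simpl; rewrite H0; auto.
Qed.

Lemma PF_shift d Q : PF d Q -> PF d (fun x => Q (x + 1)).
Proof.
  induction 1.
  - apply PFc.
  - apply (PFadd _ _ _ IHPF1 IHPF2).
  - eapply PFext; [apply (PFmul _ _ a (a + b) IHPF)|]. intros; simpl; ring.
  - apply PFweak; auto.
  - eapply PFext; [apply IHPF|]. intros; simpl; rewrite H0; auto.
Qed.

Lemma PF_le d d' Q : (d <= d')%nat -> PF d Q -> PF d' Q.
Proof. induction 1; auto. intros; apply PFweak; auto. Qed.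

Lemma PF_delta e Q : PF e Q -> PF (pred e) (fun x => Q (x + 1) - Q x).
Proof.
  induction 1.
  - eapply PFext; [apply (PFc 0)|]. intros; simpl; ring.
  - eapply PFext; [apply (PFadd _ _ _ IHPF1 IHPF2)|]. intros; simpl; ring.
  - simpl. destruct d as [|d].
    + destruct (PF0_const _ _ H eq_refl) as [c Hc].
      eapply PFext; [apply (PFc (c * a))|]. intros; rewrite !Hc; ring.
    + eapply PFext; [apply (PFadd _ _ _ (PFmul _ _ a b IHPF) (PF_scal _ _ a (PF_shift _ _ H)))|].
      intros; simpl; ring.
  - simpl. destruct d as [|d]; simpl in IHPF; auto. apply PFweak; auto.
  - eapply PFext; [apply IHPF|]. intros; simpl; rewrite !H0; auto.
Qed.

Lemma sumR_S_eq m g : sumR (S m) g = sumR m g + g m.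
Proof. reflexivity. Qed.

Definition DF N Q := sumR (S N) (fun k => Binomial.C N k * (-1) ^ (N - k) * Q (INR k)).

Lemma DF_S N Q : DF (S N) Q = DF N (fun x => Q (x + 1)) - DF N Q.
Proof.
  unfold DF. rewrite sumR_shift. cbv beta.
  rewrite (sumR_S_eq N (fun k => Binomial.C (S N) (S k) * (-1) ^ (S N - S k) * Q (INR (S k)))).
  assert (HC0 : forall m, Binomial.C m 0 = 1).
  { intros m. unfold Binomial.C. rewrite Nat.sub_0_r. simpl. field. apply INR_fact_neq_0. }
  rewrite (sumR_ext N (fun k => Binomial.C (S N) (S k) * (-1) ^ (S N - S k) * Q (INR (S k)))
      (fun k => Binomial.C N k * (-1) ^ (N - k) * Q (INR k + 1) + - (Binomial.C N (S k) * (-1) ^ (N - S k) * Q (INR (S k))))).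
  2:{ intros k Hk. rewrite <- pascal by auto. rewrite S_INR.
      replace (S N - S k)%nat with (S (N - S k)) by lia. replace (N - k)%nat with (S (N - S k)) by lia.
      simpl. ring. }
  rewrite sumR_plus, sumR_opp.
  rewrite (sumR_shift N (fun k => Binomial.C N k * (-1) ^ (N - k) * Q (INR k))).
  rewrite (sumR_S_eq N (fun k => Binomial.C N k * (-1) ^ (N - k) * Q (INR k + 1))). cbv beta.
  assert (HCn : forall m, Binomial.C m m = 1).
  { intros m. unfold Binomial.C. rewrite Nat.sub_diag. simpl. field. apply INR_fact_neq_0. }
  rewrite !HC0, !HCn. rewrite Nat.sub_diag. rewrite S_INR.
  replace (S N - 0)%nat with (S N) by lia. replace (N - 0)%nat with N by lia. replace (S N - S N)%nat with O by lia.
  rewrite Nat.sub_diag. simpl. ring.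
Qed.

Lemma DF_PF N : forall d Q, PF d Q -> (d < N)%nat -> DF N Q = 0.
Proof.
  induction N as [|N IH]; intros d Q HQ Hd; [lia|].
  rewrite DF_S.
  destruct N as [|N'].
  - assert (d = O) by lia. subst. destruct (PF0_const _ _ HQ eq_refl) as [c Hc].
    unfold DF. simpl. rewrite !Hc. ring.
  - assert (Hdel := PF_delta _ _ HQ).
    assert (E : DF (S N') (fun x => Q (x + 1) - Q x) = 0) by (apply (IH (pred d)); auto; lia).
    unfold DF in *. rewrite <- E. unfold Rminus. rewrite <- sumR_opp, <- sumR_plus.
    apply sumR_ext; intros; ring.
Qed.

Fixpoint pex (a : R) (N j : nat) : R :=
  match N with O => 1 | S N' => pex a N' j * (if Nat.eqb N' j then 1 else a + INR N') end.

Lemma pex_full a N j : (N <= j)%nat -> pex a N j = poch a N.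
Proof.
  induction N; simpl; intros; auto.
  destruct (Nat.eqb_spec N j); [lia|]. rewrite IHN by lia. auto.
Qed.

Lemma poch_split a N j : (j < N)%nat -> poch a N = (a + INR j) * pex a N j.
Proof.
  induction N; intros H; [lia|]. simpl.
  destruct (Nat.eqb_spec N j).
  - subst. rewrite pex_full by lia. ring.
  - rewrite IHN by lia. ring.
Qed.

Lemma pex_PF_full b N j : PF N (fun x => pex (/2 * x + b) N j).
Proof.
  induction N; simpl.
  - apply PFc.
  - destruct (Nat.eqb N j).
    + apply PFweak. eapply PFext; [apply IHN|]. intros; simpl; ring.
    + eapply PFext; [apply (PFmul _ _ (/2) (b + INR N) IHN)|]. intros; simpl; ring.
Qed.

Lemma pex_PF b N j : (j < N)%nat -> PF (N - 1) (fun x => pex (/2 * x + b) N j).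
Proof.
  induction N; intros H; [lia|]. simpl.
  destruct (Nat.eqb_spec N j).
  - subst. rewrite Nat.sub_0_r.
    eapply PFext; [apply (pex_PF_full b j j)|]. intros; simpl; ring.
  - replace (N - 0)%nat with (S (N - 1)) by lia.
    eapply PFext; [apply (PFmul _ _ (/2) (b + INR N) (IHN ltac:(lia)))|]. intros; simpl; ring.
Qed.

Lemma mom_gen N j b : (j < N)%nat -> 0 < b ->
  sumR (S N) (fun k => Binomial.C N k * (poch (/2 * INR k + b) N / INR (fact N)) * (-1) ^ (N - k)
                        / (INR k + (2 * INR j + 2 * b))) = 0.
Proof.
  intros Hj Hb.
  set (Q := fun x => / (2 * INR (fact N)) * pex (/2 * x + b) N j).
  assert (HQ : PF (N - 1) Q) by (apply PF_scal; apply pex_PF; auto).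
  assert (E := DF_PF N _ Q HQ ltac:(lia)). unfold DF in E. rewrite <- E.
  apply sumR_ext. intros k Hk. unfold Q.
  rewrite (poch_split _ N j Hj).
  assert (0 < INR k + (2 * INR j + 2 * b)) by (pose proof (pos_INR k); pose proof (pos_INR j); lra).
  assert (INR (fact N) <> 0) by apply INR_fact_neq_0.
  field. lra.
Qed.

Definition pc N k := Binomial.C N k * gbinom N (INR k / 2) * (-1) ^ (N - k).
Definition qc N k := Binomial.C N k * gbinom N ((INR k - 1) / 2) * (-1) ^ (N - k).

Lemma p_poly_eq N x : p_poly N x = sumR (S N) (fun k => pc N k * x ^ k).
Proof. reflexivity. Qed.
Lemma q_poly_eq N x : q_poly N x = sumR (S N) (fun k => qc N k * x ^ k).
Proof. reflexivity. Qed.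

Lemma mom_p N j : (j < N)%nat -> sumR (S N) (fun k => pc N k / (INR k + (2 * INR j + 2))) = 0.
Proof.
  intros Hj. rewrite <- (mom_gen N j 1 Hj ltac:(lra)). apply sumR_ext. intros k _.
  unfold pc, gbinom. replace (INR k / 2 + 1) with (/2 * INR k + 1) by field.
  replace (2 * INR j + 2 * 1) with (2 * INR j + 2) by ring. auto.
Qed.

Lemma mom_q N j : (j < N)%nat -> sumR (S N) (fun k => qc N k / (INR k + (2 * INR j + 1))) = 0.
Proof.
  intros Hj. rewrite <- (mom_gen N j (/2) Hj ltac:(lra)). apply sumR_ext. intros k _.
  unfold qc, gbinom. replace ((INR k - 1) / 2 + 1) with (/2 * INR k + /2) by field.
  replace (2 * INR j + 2 * /2) with (2 * INR j + 1) by field. auto.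
Qed.

Lemma poch_pos a N : 0 < a -> 0 < poch a N.
Proof. intros Ha. induction N; simpl; [lra|]. pose proof (pos_INR N). apply Rmult_lt_0_compat; lra. Qed.

Lemma pc_top N : pc N N <> 0.
Proof.
  unfold pc, gbinom. rewrite Nat.sub_diag.
  assert (HCn : Binomial.C N N = 1).
  { unfold Binomial.C. rewrite Nat.sub_diag. simpl. field. apply INR_fact_neq_0. }
  rewrite HCn. assert (0 < poch (INR N / 2 + 1) N) by (apply poch_pos; pose proof (pos_INR N); lra).
  assert (0 < INR (fact N)) by (apply lt_0_INR; apply lt_O_fact).
  simpl. assert (0 < poch (INR N / 2 + 1) N / INR (fact N)) by (apply Rdiv_lt_0_compat; auto). lra.
Qed.

Lemma qc_top N : qc N N <> 0.
Proof.
  unfold qc, gbinom. rewrite Nat.sub_diag.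
  assert (HCn : Binomial.C N N = 1).
  { unfold Binomial.C. rewrite Nat.sub_diag. simpl. field. apply INR_fact_neq_0. }
  rewrite HCn. assert (0 < poch ((INR N - 1) / 2 + 1) N) by (apply poch_pos; pose proof (pos_INR N); lra).
  assert (0 < INR (fact N)) by (apply lt_0_INR; apply lt_O_fact).
  simpl. assert (0 < poch ((INR N - 1) / 2 + 1) N / INR (fact N)) by (apply Rdiv_lt_0_compat; auto). lra.
Qed.

Lemma is_RInt_mono d p a b : is_RInt (fun t => d * t ^ p) a b (d * (b ^ S p - a ^ S p) / INR (S p)).
Proof.
  assert (Hp : INR (S p) <> 0) by (apply not_0_INR; lia).
  replace (d * (b ^ S p - a ^ S p) / INR (S p)) with
    (minus ((fun t => d * t ^ S p / INR (S p)) b) ((fun t => d * t ^ S p / INR (S p)) a)).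
  2:{ unfold minus, plus, opp; simpl. field. auto. }
  apply (is_RInt_derive (fun t => d * t ^ S p / INR (S p)) (fun t => d * t ^ p)).
  - intros y _. auto_derive; [exact I|]. replace (match p with 0%nat => 1 | S _ => INR p + 1 end) with (INR (S p)) by reflexivity. field. auto.
  - intros y _. apply (ex_derive_continuous (fun t => d * t ^ p)). auto_derive. exact I.
Qed.

Lemma is_RInt_polyi d M i a b :
  is_RInt (fun t => sumR M (fun m => d m * t ^ (m + i))) a b
          (sumR M (fun m => d m * (b ^ S (m + i) - a ^ S (m + i)) / INR (S (m + i)))).
Proof.
  induction M; simpl.
  - assert (E : @scal R_AbsRing R_NormedModule (b - a) 0 = 0) by (unfold scal; simpl; unfold mult; simpl; ring).
    exact (eq_ind _ (fun l => is_RInt (fun _ => 0) a b l) (is_RInt_const a b 0) _ E).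
  - apply (is_RInt_plus _ _ a b _ _ IHM (is_RInt_mono (d M) (M + i) a b)).
Qed.

Lemma poly_ex_derive d M x : ex_derive (fun t => sumR M (fun m => d m * t ^ m)) x.
Proof.
  induction M; simpl.
  - apply ex_derive_const.
  - apply (ex_derive_plus _ _ _ IHM). apply ex_derive_scal. apply ex_derive_pow. apply ex_derive_id.
Qed.

Lemma pow_m1_sq m : (-1) ^ m * (-1) ^ m = 1.
Proof. induction m; simpl; [ring|]. replace (-1 * (-1) ^ m * (-1 * (-1) ^ m)) with ((-1) ^ m * (-1) ^ m) by ring. auto. Qed.

Lemma sumR_mult_r M g c : sumR M g * c = sumR M (fun m => g m * c).
Proof. induction M; simpl; [ring|]. rewrite <- IHM. ring. Qed.

Lemma moment f (a : nat -> R) M s i v :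
  (forall t, 0 < t < 1 -> f t = sumR M (fun m => a m * t ^ m)) ->
  (forall t, 0 < t < 1 -> f (- t) = s * f t) ->
  s * (-1) ^ i = 1 ->
  RInt_eq (fun t => f t * t ^ i) (-1) 1 v ->
  v = 2 * sumR M (fun m => a m / INR (S (m + i))).
Proof.
  intros Hp Hs Hsi [pr Hv].
  set (g := fun t => f t * t ^ i).
  assert (Hex : ex_RInt g (-1) 1) by (apply ex_RInt_Reals_1; exact pr).
  rewrite <- (RInt_Reals _ _ _ pr) in Hv. change (RInt g (-1) 1 = v) in Hv.
  rewrite <- (RInt_Chasles g (-1) 0 1) in Hv.
  2: apply (ex_RInt_Chasles_1 g (-1) 0 1); auto; lra.
  2: apply (ex_RInt_Chasles_2 g (-1) 0 1); auto; lra.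
  rewrite (RInt_ext g (fun t => sumR M (fun m => a m * t ^ (m + i))) 0 1) in Hv.
  2:{ intros x Hx. rewrite Rmin_left, Rmax_right in Hx by lra. unfold g. rewrite Hp by lra.
      rewrite sumR_mult_r. apply sumR_ext. intros; rewrite pow_add; ring. }
  rewrite (RInt_ext g (fun t => sumR M (fun m => (s * a m * (-1) ^ m) * t ^ (m + i))) (-1) 0) in Hv.
  2:{ intros x Hx. rewrite Rmin_left, Rmax_right in Hx by lra. unfold g.
      replace x with (- - x) at 1 by ring. rewrite Hs by lra. rewrite Hp by lra.
      rewrite <- sumR_scal, sumR_mult_r. apply sumR_ext. intros.
      replace (- x) with (-1 * x) by ring. rewrite Rpow_mult_distr, pow_add. ring. }
  rewrite (is_RInt_unique _ _ _ _ (is_RInt_polyi _ M i _ _)) in Hv.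
  rewrite (is_RInt_unique _ _ _ _ (is_RInt_polyi _ M i _ _)) in Hv.
  change (plus ?x ?y = v) with (x + y = v) in Hv. rewrite <- Hv. rewrite <- sumR_plus, <- sumR_scal. apply sumR_ext. intros m _.
  assert (INR (S (m + i)) <> 0) by (apply not_0_INR; lia).
  assert (E0 : 0 ^ S (m + i) = 0) by (simpl; ring).
  assert (E1 : (-1) ^ S (m + i) = - ((-1) ^ m * (-1) ^ i)) by (rewrite <- pow_add; simpl; ring).
  rewrite pow1, E0, E1.
  replace (s * a m * (-1) ^ m * (0 - - ((-1) ^ m * (-1) ^ i))) with (a m * (s * (-1)^i) * ((-1)^m * (-1)^m)) by ring.
  rewrite Hsi, pow_m1_sq. field. auto.
Qed.

Lemma RInt_mulc k h a b l : is_RInt h a b l -> RInt (fun t => k * h t) a b = k * l.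
Proof. intros H. apply is_RInt_unique. exact (is_RInt_scal h a b k l H). Qed.

Lemma sq_int f c P s :
  (forall t, 0 < t < 1 -> f t = c * P t) ->
  (forall t, 0 < t < 1 -> f (- t) = s * f t) ->
  s * s = 1 ->
  (forall x, ex_derive P x) ->
  RInt_eq (fun t => f t * f t) (-1) 1 1 ->
  exists I, RInt_eq (fun x => P x ^ 2) 0 1 I /\ 1 = 2 * c ^ 2 * I.
Proof.
  intros Hp Hs Hss Hd [pr Hv].
  assert (HexP : ex_RInt (fun x => P x ^ 2) 0 1).
  { apply (ex_RInt_continuous (V := R_CompleteNormedModule)). intros z _. apply (ex_derive_continuous (fun x => P x ^ 2)).
    apply ex_derive_pow. auto. }
  exists (RInt (fun x => P x ^ 2) 0 1). split.
  { exists (ex_RInt_Reals_0 _ _ _ HexP). rewrite <- RInt_Reals. reflexivity. }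
  set (g := fun t => f t * f t).
  assert (Hex : ex_RInt g (-1) 1) by (apply ex_RInt_Reals_1; exact pr).
  rewrite <- (RInt_Reals _ _ _ pr) in Hv. change (RInt g (-1) 1 = 1) in Hv.
  rewrite <- (RInt_Chasles g (-1) 0 1) in Hv.
  2: apply (ex_RInt_Chasles_1 g (-1) 0 1); auto; lra.
  2: apply (ex_RInt_Chasles_2 g (-1) 0 1); auto; lra.
  rewrite (RInt_ext g (fun t => c ^ 2 * P t ^ 2) 0 1) in Hv.
  2:{ intros x Hx. rewrite Rmin_left, Rmax_right in Hx by lra. unfold g. rewrite Hp by lra.
      simpl. ring. }
  rewrite (RInt_ext g (fun t => c ^ 2 * P (- t) ^ 2) (-1) 0) in Hv.
  2:{ intros x Hx. rewrite Rmin_left, Rmax_right in Hx by lra. unfold g.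
      replace x with (- - x) by ring. rewrite Hs by lra. rewrite Hp by lra.
      replace (- - - x) with (- x) by ring.
      replace (s * (c * P (- x)) * (s * (c * P (- x)))) with ((s * s) * (c * c * (P (- x) * P (- x)))) by ring.
      rewrite Hss. simpl. ring. }
  assert (HI := RInt_correct _ _ _ HexP).
  assert (H2 : is_RInt (fun t => P (- t) ^ 2) (-1) 0 (RInt (fun x => P x ^ 2) 0 1)).
  { assert (H1 := is_RInt_opp _ _ _ _ (is_RInt_swap _ _ _ _ HI)).
    assert (H3 : is_RInt (fun y => opp (P y ^ 2)) (- -1) (- 0) (opp (opp (RInt (fun x => P x ^ 2) 0 1)))).
    { replace (- -1) with 1 by ring. replace (-0) with 0 by ring. exact H1. }
    assert (H4 := is_RInt_comp_opp _ _ _ _ H3).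
    rewrite opp_opp in H4.
    eapply is_RInt_ext; [|exact H4]. intros x _. simpl. unfold opp; simpl. ring. }
  rewrite (RInt_mulc _ _ _ _ _ H2) in Hv.
  rewrite (RInt_mulc _ _ _ _ _ HI) in Hv.
  change (plus ?x ?y = 1) with (x + y = 1) in Hv. set (I := RInt (fun x => P x ^ 2) 0 1) in *. set (K := c ^ 2 * I) in *. replace (2 * c ^ 2 * I) with (2 * K) by (unfold K; ring). lra.
Qed.

Lemma poly_ex_derive2 (d : nat -> R) M x : ex_derive (fun t => sumR M (fun m => d m * t ^ m)) x.
Proof. apply poly_ex_derive. Qed.

Lemma uniq_coef N (a b s : nat -> R) :
  (forall j, 0 < s j) -> (forall i j, (i < N)%nat -> (j < N)%nat -> s i = s j -> i = j) ->
  b N <> 0 ->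
  (forall j, (j < N)%nat -> sumR (S N) (fun m => a m / (INR m + s j)) = 0) ->
  (forall j, (j < N)%nat -> sumR (S N) (fun m => b m / (INR m + s j)) = 0) ->
  forall m, (m <= N)%nat -> a m = a N / b N * b m.
Proof.
  intros Hs Hinj HbN Ha Hb.
  set (c := a N / b N).
  assert (Hr : forall m, (m < N)%nat -> a m - c * b m = 0).
  { apply (cauchy_uniq N (fun m => a m - c * b m) s Hs Hinj).
    intros j Hj. specialize (Ha j Hj). specialize (Hb j Hj). simpl in Ha, Hb.
    assert (0 < INR N + s j) by (pose proof (pos_INR N); pose proof (Hs j); lra).
    assert (E : sumR N (fun m => (a m - c * b m) / (INR m + s j)) =
                sumR N (fun m => a m / (INR m + s j)) + (- c) * sumR N (fun m => b m / (INR m + s j))).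
    { rewrite <- sumR_scal, <- sumR_plus. apply sumR_ext. intros k Hk.
      assert (0 < INR k + s j) by (pose proof (pos_INR k); pose proof (Hs j); lra). field. lra. }
    rewrite E.
    assert (E2 : a N / (INR N + s j) = c * (b N / (INR N + s j))) by (unfold c; field; split; lra).
    assert (X : sumR N (fun m => a m / (INR m + s j)) = - (a N / (INR N + s j))) by lra.
    assert (Y : sumR N (fun m => b m / (INR m + s j)) = - (b N / (INR N + s j))) by lra.
    rewrite X, Y, E2. ring. }
  intros m Hm. destruct (Nat.eq_dec m N) as [->|Hne].
  - unfold c. field. auto.
  - specialize (Hr m ltac:(lia)). fold c. lra.
Qed.

Lemma pow_m1_even k : (-1) ^ (2 * k) = 1.
Proof. rewrite pow_mult. replace ((-1) ^ 2) with 1 by ring. apply pow1. Qed.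

Lemma INR_2j x y : INR (x + 2 * y) = INR x + 2 * INR y.
Proof. rewrite plus_INR, mult_INR. simpl. ring. Qed.

Theorem mainTheorem4 (n : nat) (f : nat -> R -> R) :
  (1 <= n)%nat -> Alpert n f ->
  (exists c I : R,
      RInt_eq (fun x => (p_poly (n - 1) x) ^ 2) 0 1 I /\
      / (c ^ 2) = 2 * I /\
      forall x, 0 < x < 1 -> f n x = c * p_poly (n - 1) x) /\
  ((2 <= n)%nat ->
   exists d I : R,
      RInt_eq (fun x => (q_poly (n - 1) x) ^ 2) 0 1 I /\
      / (d ^ 2) = 2 * I /\
      forall x, 0 < x < 1 -> f (n - 1)%nat x = d * q_poly (n - 1) x).
Proof.
  intros Hn [Hsupp [Hpoly [Hsym [Horth Hmom]]]].
  destruct n as [|N]; [lia|]. replace (S N - 1)%nat with N by lia.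
  split.
  -
    destruct (Hpoly (S N) ltac:(lia)) as [a Ha].
    assert (Hs : forall t, 0 < t < 1 -> f (S N) (- t) = -1 * f (S N) t).
    { intros t Ht. rewrite Hsym by (auto; lia).
      replace (S N + S N - 1)%nat with (S (2 * N)) by lia. change ((-1) ^ S (2 * N)) with (-1 * (-1) ^ (2 * N)). rewrite pow_m1_even. ring. }
    assert (Hmomp : forall j, (j < N)%nat -> sumR (S N) (fun m => a m / (INR m + (2 * INR j + 2))) = 0).
    { intros j Hj.
      assert (Hv := moment (f (S N)) a (S N) (-1) (2 * j + 1) 0 Ha Hs).
      assert (Hv2 : 0 = 2 * sumR (S N) (fun m => a m / INR (S (m + (2 * j + 1))))).
      { apply Hv. rewrite pow_add, pow_m1_even. ring. apply Hmom; lia. }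
      rewrite (sumR_ext _ _ (fun m => a m / INR (S (m + (2 * j + 1))))). lra.
      intros m _. replace (S (m + (2 * j + 1))) with ((m + 2 * S j))%nat by lia.
      rewrite INR_2j, S_INR. f_equal. ring. }
    assert (Hco := uniq_coef N a (pc N) (fun j => 2 * INR j + 2)).
    assert (Hco' : forall m, (m <= N)%nat -> a m = a N / pc N N * pc N m).
    { apply Hco; auto.
      - intros j. pose proof (pos_INR j). lra.
      - intros i j _ _ E. apply INR_eq. lra.
      - apply pc_top.
      - intros j Hj. apply mom_p; auto. }
    set (c := a N / pc N N) in *.
    assert (Hf : forall x, 0 < x < 1 -> f (S N) x = c * p_poly N x).
    { intros x Hx. rewrite Ha by auto. rewrite p_poly_eq, <- sumR_scal. apply sumR_ext.
      intros m Hm. rewrite Hco' by lia. ring. }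
    assert (Ho := Horth (S N) (S N) ltac:(lia) ltac:(lia)). rewrite Nat.eqb_refl in Ho.
    destruct (sq_int (f (S N)) c (p_poly N) (-1) Hf Hs ltac:(ring)
               (fun x => poly_ex_derive (pc N) (S N) x) Ho) as [I [HI E]].
    exists c, I. split; [exact HI|]. split; [|exact Hf].
    assert (c ^ 2 <> 0) by (intro Z; rewrite Z in E; lra).
    apply (Rmult_eq_reg_l (c ^ 2)); auto. rewrite Rinv_r by auto. rewrite E at 1. ring.
  -
    intros H2. destruct N as [|N']; [lia|]. set (N := S N') in *.
    destruct (Hpoly N ltac:(lia)) as [a Ha].
    assert (Hs : forall t, 0 < t < 1 -> f N (- t) = 1 * f N t).
    { intros t Ht. rewrite Hsym by (auto; lia).
      replace (N + S N - 1)%nat with (2 * N)%nat by lia. rewrite pow_m1_even. ring. }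
    assert (Hmomq : forall j, (j < N)%nat -> sumR (S N) (fun m => a m / (INR m + (2 * INR j + 1))) = 0).
    { intros j Hj.
      assert (Hv := moment (f N) a (S N) 1 (2 * j) 0 Ha Hs).
      assert (Hv2 : 0 = 2 * sumR (S N) (fun m => a m / INR (S (m + 2 * j)))).
      { apply Hv. rewrite pow_m1_even. ring. apply Hmom; lia. }
      rewrite (sumR_ext _ _ (fun m => a m / INR (S (m + 2 * j)))). lra.
      intros m _. replace (S (m + 2 * j)) with (S m + 2 * j)%nat by lia.
      rewrite INR_2j, S_INR. f_equal. ring. }
    assert (Hco := uniq_coef N a (qc N) (fun j => 2 * INR j + 1)).
    assert (Hco' : forall m, (m <= N)%nat -> a m = a N / qc N N * qc N m).
    { apply Hco; auto.
      - intros j. pose proof (pos_INR j). lra.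
      - intros i j _ _ E. apply INR_eq. lra.
      - apply qc_top.
      - intros j Hj. apply mom_q; auto. }
    set (c := a N / qc N N) in *.
    assert (Hf : forall x, 0 < x < 1 -> f N x = c * q_poly N x).
    { intros x Hx. rewrite Ha by auto. rewrite q_poly_eq, <- sumR_scal. apply sumR_ext.
      intros m Hm. rewrite Hco' by lia. ring. }
    assert (Ho := Horth N N ltac:(lia) ltac:(lia)). rewrite Nat.eqb_refl in Ho.
    destruct (sq_int (f N) c (q_poly N) 1 Hf Hs ltac:(ring)
               (fun x => poly_ex_derive (qc N) (S N) x) Ho) as [I [HI E]].
    exists c, I. split; [exact HI|]. split; [|exact Hf].
    assert (c ^ 2 <> 0) by (intro Z; rewrite Z in E; lra).
    apply (Rmult_eq_reg_l (c ^ 2)); auto. rewrite Rinv_r by auto. rewrite E at 1. ring.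
Qed.
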